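(* Let $|\psi_1\rangle,\dots,|\psi_4\rangle$ be pure qubit states with $\langle\psi_1|\psi_3\rangle=\langle\psi_2|\psi_4\rangle=0$, and consider the ensemble $\{1/4,\rho_x=|\psi_x\rangle\langle\psi_x|\}_{x=1}^4$. Then its symmetry operator is $K=I/4$ (the same for all such choices of the two orthogonal pairs), so all such sets lie in the same equivalence class, and $P_{\mathrm{guess}}=\mathrm{tr}[K]=1/2$.
   Context: For an ensemble $\{q_x,\rho_x\}$, the symmetry operator is the (unique) Hermitian $K$ for which there exist $r_x\ge0$, density operators $\sigma_x$ and a POVM $\{M_x\}$ with $K=q_x\rho_x+r_x\sigma_x$ and $r_x\mathrm{tr}[M_x\sigma_x]=0$ for all $x$; it satisfies $\mathrm{tr}[K]=P_{\mathrm{guess}}=\max_{\text{POVMs}}\sum_x q_x\mathrm{tr}[M_x\rho_x]$. Two ensembles are equivalent (same equivalence class) if their symmetry operators are unitarily equivalent. *)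

(* Defs.v *)
From HB Require Import structures.
From mathcomp Require Import all_boot all_order all_algebra.
Set Implicit Arguments. Unset Strict Implicit. Unset Printing Implicit Defensive.
Import Order.TTheory GRing.Theory Num.Theory.
Local Open Scope ring_scope.

Section QDefs.
Variable C : numClosedFieldType.

Definition adj m n (A : 'M[C]_(m, n)) : 'M[C]_(n, m) := (map_mx Num.conj A)^T.

Definition braket n (u v : 'cV[C]_n) : C := (adj u *m v) 0 0.

Definition hermitian_mx n (A : 'M[C]_n) : Prop := adj A = A.

Definition psd n (A : 'M[C]_n) : Prop :=
  hermitian_mx A /\ forall v : 'cV[C]_n, 0 <= (adj v *m A *m v) 0 0.

Definition density n (rho : 'M[C]_n) : Prop := psd rho /\ \tr rho = 1.

Definition unit_vec n (psi : 'cV[C]_n) : Prop := braket psi psi = 1.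
Definition proj_of n (psi : 'cV[C]_n) : 'M[C]_n := psi *m adj psi.

Definition povm n k (M : 'I_k -> 'M[C]_n) : Prop :=
  (forall x, psd (M x)) /\ \sum_(x < k) M x = 1%:M.

Definition psucc n k (q : 'I_k -> C) (rho : 'I_k -> 'M[C]_n)
  (M : 'I_k -> 'M[C]_n) : C := \sum_(x < k) q x * \tr (M x *m rho x).

Definition is_Pguess n k (q : 'I_k -> C) (rho : 'I_k -> 'M[C]_n) (p : C) : Prop :=
  (exists M, povm M /\ psucc q rho M = p) /\
  (forall M, povm M -> psucc q rho M <= p).

Definition is_symmetry_operator n k (q : 'I_k -> C) (rho : 'I_k -> 'M[C]_n)
  (K : 'M[C]_n) : Prop :=
  hermitian_mx K /\
  exists (r : 'I_k -> C) (sigma : 'I_k -> 'M[C]_n) (M : 'I_k -> 'M[C]_n),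
    povm M /\
    forall x, 0 <= r x /\ density (sigma x) /\
              K = q x *: rho x + r x *: sigma x /\
              r x * \tr (M x *m sigma x) = 0.

End QDefs.

(* Main.v *)
Require Import Defs.
From HB Require Import structures.
From mathcomp Require Import all_boot all_order all_algebra.
From mathcomp Require Import ring.
Import Order.TTheory GRing.Theory Num.Theory.
Local Open Scope ring_scope.
Set Implicit Arguments. Unset Strict Implicit.

Section L.
Variable C : numClosedFieldType.

Lemma adjK m n (A : 'M[C]_(m,n)) : adj (adj A) = A.
Proof. by apply/matrixP=> i j; rewrite /adj !mxE conjCK. Qed.
Lemma adjM m n p (A : 'M[C]_(m,n)) (B : 'M[C]_(n,p)) : adj (A *m B) = adj B *m adj A.
Proof. by rewrite /adj map_mxM trmx_mul. Qed.
Lemma adjD m n (A B : 'M[C]_(m,n)) : adj (A + B) = adj A + adj B.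
Proof. by rewrite /adj map_mxD linearD. Qed.
Lemma adjZ m n a (A : 'M[C]_(m,n)) : adj (a *: A) = a^* *: adj A.
Proof. by rewrite /adj map_mxZ linearZ. Qed.
Lemma adjN m n (A : 'M[C]_(m,n)) : adj (- A) = - adj A.
Proof. by rewrite /adj map_mxN linearN. Qed.
Lemma adj0 m n : adj (0 : 'M[C]_(m,n)) = 0.
Proof. by apply/matrixP=> i j; rewrite /adj !mxE conjC0. Qed.
Lemma adj_scalar n a : adj (a%:M : 'M[C]_n) = (a^*)%:M.
Proof. by apply/matrixP=> i j; rewrite /adj !mxE rmorphMn eq_sym. Qed.
Lemma adj00 (A : 'M[C]_1) : adj A 0 0 = (A 0 0)^*.
Proof. by rewrite /adj !mxE. Qed.
Lemma mx11M (A B : 'M[C]_1) : (A *m B) 0 0 = A 0 0 * B 0 0.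
Proof. by rewrite !mxE big_ord1. Qed.
Lemma tr11 (A : 'M[C]_1) : \tr A = A 0 0.
Proof. by rewrite /mxtrace big_ord1. Qed.
Lemma braketC n (u v : 'cV[C]_n) : braket u v = (braket v u)^*.
Proof. by rewrite /braket -adj00 adjM adjK. Qed.

Definition qf n (u : 'cV[C]_n) (A : 'M[C]_n) (v : 'cV[C]_n) := (adj u *m A *m v) 0 0.

Lemma qf_proj n (u e v : 'cV[C]_n) : qf u (proj_of e) v = braket u e * braket e v.
Proof. by rewrite /qf /proj_of !mulmxA -mulmxA mx11M. Qed.

Lemma tr_proj n (A : 'M[C]_n) e : \tr (A *m proj_of e) = qf e A e.
Proof. by rewrite /proj_of mulmxA mxtrace_mulC tr11 /qf mulmxA. Qed.

Lemma proj_psd n (e : 'cV[C]_n) : psd (proj_of e).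
Proof.
split; first by rewrite /hermitian_mx /proj_of adjM adjK.
move=> v; have := qf_proj v e v; rewrite /qf => ->.
by rewrite [braket v e]braketC mulrC mul_conjC_ge0.
Qed.

Lemma proj_tr n (e : 'cV[C]_n) : unit_vec e -> \tr (proj_of e) = 1.
Proof. by move=> He; rewrite /proj_of mxtrace_mulC tr11. Qed.

Lemma complete2 (e f : 'cV[C]_2) : unit_vec e -> unit_vec f -> braket e f = 0 ->
  proj_of e + proj_of f = 1%:M.
Proof.
move=> He Hf Hef.
have Hfe : braket f e = 0 by rewrite braketC Hef conjC0.
pose U : 'M[C]_(2, 1 + 1) := row_mx e f.
have aU : adj U = col_mx (adj e) (adj f).
  by rewrite /U /adj map_row_mx tr_row_mx.
have H1 : adj U *m U = 1%:M.
  rewrite aU mul_col_row (mx11_scalar (adj e *m e)) (mx11_scalar (adj e *m f)).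
  rewrite (mx11_scalar (adj f *m e)) (mx11_scalar (adj f *m f)).
  rewrite -[(adj e *m e) 0 0]/(braket e e) -[(adj e *m f) 0 0]/(braket e f).
  rewrite -[(adj f *m e) 0 0]/(braket f e) -[(adj f *m f) 0 0]/(braket f f).
  by rewrite He Hf Hef Hfe !raddf0 -scalar_mx_block.
have H2 := mulmx1C H1.
by rewrite -H2 aU mul_row_col.
Qed.
Lemma qfDl n (x y z : 'cV[C]_n) a A : qf (a *: x + y) A z = a^* * qf x A z + qf y A z.
Proof. by rewrite /qf adjD adjZ !mulmxDl -!scalemxAl !mxE. Qed.
Lemma qfDr n (x y z : 'cV[C]_n) a A : qf x A (a *: y + z) = a * qf x A y + qf x A z.
Proof. by rewrite /qf !mulmxDr -!scalemxAr !mxE. Qed.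
Lemma qf_herm n (x y : 'cV[C]_n) A : hermitian_mx A -> qf x A y = (qf y A x)^*.
Proof. by move=> hA; rewrite /qf -adj00 !adjM adjK hA mulmxA. Qed.
Lemma qf_delta n (i : 'I_n) A (v : 'cV[C]_n) : qf (delta_mx i 0) A v = (A *m v) i 0.
Proof.
rewrite /qf.
have -> : adj (delta_mx i 0 : 'cV[C]_n) = delta_mx 0 i.
  by apply/matrixP=> a b; rewrite /adj !mxE conjC_nat andbC.
by rewrite -mulmxA -rowE mxE.
Qed.

Lemma conjMC (x y : C) : x^* * y^* = (x * y)^*.
Proof. by rewrite rmorphM. Qed.
Lemma conj_half (x : C) : 0 <= x -> (- (x + 1) / 2)^* = - (x + 1) / (2 : C).
Proof. move=> x0; rewrite rmorphM rmorphN rmorphD rmorph1 -[Num.Num_conj__canonical__GRing_RMorphism C x]/(x^*) (geC0_conj x0) fmorphV rmorph_nat; reflexivity. Qed.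

Lemma psd_null n (A : 'M[C]_n) v : psd A -> qf v A v = 0 -> A *m v = 0.
Proof.
move=> [hA pA] Hv; apply/matrixP=> i j; rewrite (ord1 j) [RHS]mxE -qf_delta.
set w := delta_mx i 0; set c := qf w A v; set d := qf w A w.
apply/eqP/negPn/negP => cn0.
have d0 : 0 <= d by apply: pA.
pose l := - (d + 1) / (2 * c).
have Hlc : l * c = - (d + 1) / 2.
  by rewrite /l invfM mulrA mulfVK.
have := pA (l *: v + w).
rewrite -/(qf _ _ _) qfDl !qfDr Hv mulr0 add0r.
rewrite (qf_herm v w hA) -/c -/d conjMC Hlc.
rewrite (conj_half d0).
have -> : - (d + 1) / 2 + (- (d + 1) / 2 + d) = -1.
  by field.
by rewrite oppr_ge0 ler10.
Qed.
Lemma qfZ n (u v : 'cV[C]_n) a A : qf u (a *: A) v = a * qf u A v.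
Proof. by rewrite /qf -scalemxAr -scalemxAl mxE. Qed.
Lemma qfD n (u v : 'cV[C]_n) A B : qf u (A + B) v = qf u A v + qf u B v.
Proof. by rewrite /qf mulmxDr mulmxDl mxE. Qed.

Lemma psd_scale n a (A : 'M[C]_n) : 0 <= a -> psd A -> psd (a *: A).
Proof.
move=> a0 [hA pA]; split; first by rewrite /hermitian_mx adjZ hA (geC0_conj a0).
move=> v; have := qfZ v v a A; rewrite /qf => ->; exact: mulr_ge0.
Qed.

Lemma psd_qf n (A : 'M[C]_n) v : psd A -> 0 <= qf v A v.
Proof. by case=> _; apply. Qed.

Lemma proj_self n (e : 'cV[C]_n) : unit_vec e -> proj_of e *m e = e.
Proof.
move=> He; rewrite /proj_of -mulmxA (mx11_scalar (adj e *m e)).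
by rewrite -[(adj e *m e) 0 0]/(braket e e) He mulmx1.
Qed.

Lemma qf_self n (e : 'cV[C]_n) : unit_vec e -> qf e (proj_of e) e = 1.
Proof. by move=> He; rewrite qf_proj He mulr1. Qed.

Lemma local_lemma n (e : 'cV[C]_n) (K S : 'M[C]_n) r : unit_vec e -> 0 <= r -> psd S ->
  K = 4^-1 *: proj_of e + r *: S ->
  (qf e K e = 4^-1 + qf e (r *: S) e) /\ 0 <= qf e (r *: S) e /\
  (qf e K e = 4^-1 -> K *m e = 4^-1 *: e).
Proof.
move=> He r0 pS HK.
have pr := psd_scale r0 pS.
split; first by rewrite HK qfD qfZ qf_self // mulr1.
split; first exact: psd_qf.
move=> Hq.
have H0 : qf e (r *: S) e = 0.
  by move: Hq; rewrite HK qfD qfZ qf_self // mulr1 => /(canRL (addKr _)); rewrite addNr.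
have := psd_null pr H0.
by rewrite HK mulmxDl -!scalemxAl proj_self // => ->; rewrite addr0.
Qed.
Lemma sum4 (V : nmodType) (F : 'I_4 -> V) : \sum_(x < 4) F x = F 0 + F 1 + F 2 + F 3.
Proof.
rewrite !big_ord_recl big_ord0 addr0 !addrA.
by congr (_ + _ + _ + _); congr F; apply/val_inj.
Qed.

Lemma pair_of (psi : 'I_4 -> 'cV[C]_2) :
  (forall x, unit_vec (psi x)) ->
  braket (psi 0) (psi 2) = 0 ->
  braket (psi 1) (psi 3) = 0 ->
  forall x, exists y, proj_of (psi y) = 1%:M - proj_of (psi x) /\ braket (psi x) (psi y) = 0.
Proof.
move=> Hu H02 H13.
have H20 : braket (psi 2) (psi 0) = 0 by rewrite braketC H02 conjC0.
have H31 : braket (psi 3) (psi 1) = 0 by rewrite braketC H13 conjC0.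
have E02 := complete2 (Hu 0) (Hu 2) H02.
have E13 := complete2 (Hu 1) (Hu 3) H13.
have E20 : proj_of (psi 2) + proj_of (psi 0) = 1%:M by rewrite addrC.
have E31 : proj_of (psi 3) + proj_of (psi 1) = 1%:M by rewrite addrC.
have K : forall a b, proj_of (psi a) + proj_of (psi b) = 1%:M -> proj_of (psi b) = 1%:M - proj_of (psi a).
  by move=> a b <-; rewrite addrC addKr.
case=> -[|[|[|[|//]]]] lt.
- exists 2; split; last by rewrite -H02; congr (braket (psi _) _); apply/val_inj.
  rewrite (K 0) //; congr (_ - proj_of (psi _)); exact/val_inj.
- exists 3; split; last by rewrite -H13; congr (braket (psi _) _); apply/val_inj.
  rewrite (K 1) //; congr (_ - proj_of (psi _)); exact/val_inj.
- exists 0; split; last by rewrite -H20; congr (braket (psi _) _); apply/val_inj.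
  rewrite (K 2) //; congr (_ - proj_of (psi _)); exact/val_inj.
- exists 1; split; last by rewrite -H31; congr (braket (psi _) _); apply/val_inj.
  rewrite (K 3) //; congr (_ - proj_of (psi _)); exact/val_inj.
Qed.
End L.

Unset Implicit Arguments.
(* Indices 1..4 of the paper are 0..3 here: the orthogonal pairs are
   (psi_0, psi_2) and (psi_1, psi_3). *)
Theorem mainTheorem7 (C : numClosedFieldType) (psi : 'I_4 -> 'cV[C]_2) :
  (forall x, unit_vec (psi x)) ->
  braket (psi 0) (psi 2) = 0 ->
  braket (psi 1) (psi 3) = 0 ->
  let q : 'I_4 -> C := fun _ => 4^-1 in
  let rho : 'I_4 -> 'M[C]_2 := fun x => proj_of (psi x) in
  (forall K : 'M[C]_2, is_symmetry_operator q rho K <-> K = 4^-1%:M) /\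
  is_Pguess q rho (2^-1) /\ \tr (4^-1%:M : 'M[C]_2) = 2^-1.
Proof.
move=> Hu H02 H13 q rho.
have PO := pair_of Hu H02 H13.
have E02 := complete2 (Hu 0) (Hu 2) H02.
have E13 := complete2 (Hu 1) (Hu 3) H13.
have q0 : (0:C) <= 4^-1 by rewrite invr_ge0 ler0n.
have h0 : (0:C) <= 2^-1 by rewrite invr_ge0 ler0n.
have bound : forall M, povm M -> psucc q rho M <= 2^-1.
  move=> M [pM sM]; rewrite /psucc.
  have -> : (2^-1 : C) = \sum_(x < 4) 4^-1 * \tr (M x).
    rewrite -mulr_sumr.
    have -> : \sum_(x < 4) \tr (M x) = \tr (\sum_(x < 4) M x) by rewrite raddf_sum.
    rewrite sM mxtrace1; by field.
  apply: ler_sum => x _; apply: ler_wpM2l => //.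
  have [y [Ey _]] := PO x.
  have -> : \tr (M x) = \tr (M x *m rho x) + qf (psi y) (M x) (psi y).
    by rewrite -tr_proj -mxtraceD -mulmxDr /rho Ey addrC subrK mulmx1.
  by rewrite lerDl; apply: psd_qf.
pose M0 := fun x => 2^-1 *: rho x.
have pM0 : povm M0.
  split; first by move=> x; apply: psd_scale => //; apply: proj_psd.
  rewrite /M0 -scaler_sumr sum4 /rho [_ + proj_of (psi 2)]addrAC E02 -addrA E13.
  rewrite scalerDr !scalemx1 -raddfD /=.
  have -> : (2^-1 + 2^-1 : C) = 1 by field.
  by [].
have trr : forall x, \tr (rho x *m rho x) = 1.
  by move=> x; rewrite /rho tr_proj qf_self.
have ps0 : psucc q rho M0 = 2^-1.
  rewrite /psucc (eq_bigr (fun=> 4^-1 * 2^-1)); last first.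
    by move=> x _; rewrite /M0 -scalemxAl mxtraceZ trr mulr1.
  rewrite sum4; by field.
split; last first.
  split; first by split; [exists M0; split | exact: bound].
  by rewrite mxtrace_scalar -mulr_natr; field.
move=> K; split; last first.
  move=> ->; split.
    rewrite /hermitian_mx adj_scalar fmorphV rmorph_nat; reflexivity.
  exists (fun=> 4^-1), (fun x => 1%:M - rho x), M0; split => // x.
  have [y [Ey Bxy]] := PO x.
  split => //; split.
    rewrite /rho -Ey; split; [apply: proj_psd | exact: proj_tr (Hu y)].
  split.
    by rewrite /q -scalerDr addrC subrK scalemx1.
  rewrite /rho -Ey /M0 -scalemxAl mxtraceZ /rho tr_proj qf_proj.
  by rewrite Bxy !mulr0.
move=> [hK [r [S [M [pM HS]]]]].
have [r0 [[pS0 _] [K0 _]]] := HS 0.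
have [r2 [[pS2 _] [K2 _]]] := HS 2.
have [L0a [L0b L0c]] := local_lemma (Hu 0) r0 pS0 K0.
have [L2a [L2b L2c]] := local_lemma (Hu 2) r2 pS2 K2.
have trK : \tr K = psucc q rho M.
  rewrite /psucc.
  have -> : K = \sum_(x < 4) M x *m K by rewrite -mulmx_suml pM.2 mul1mx.
  have -> : \tr (\sum_(x < 4) M x *m K) = \sum_(x < 4) \tr (M x *m K) by rewrite raddf_sum.
  apply: eq_bigr => x _.
  have [_ [_ [Kx Zx]]] := HS x.
  by rewrite Kx mulmxDr -!scalemxAr mxtraceD !mxtraceZ Zx addr0.
have trK2 : \tr K = qf (psi 0) K (psi 0) + qf (psi 2) K (psi 2).
  by rewrite -{1}[K]mulmx1 -E02 mulmxDr mxtraceD !tr_proj.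
have := bound M pM; rewrite -trK trK2 L0a L2a.
set s0 := qf _ (r 0 *: S 0) _; set s2 := qf _ (r 2 *: S 2) _.
have -> : 4^-1 + s0 + (4^-1 + s2) = 2^-1 + (s0 + s2) by field.
rewrite -{2}[2^-1]addr0 lerD2l => hs.
have s00 : s0 = 0.
  by apply/le_anti/andP; split => //; apply: le_trans hs; rewrite lerDl.
have s20 : s2 = 0.
  by apply/le_anti/andP; split => //; apply: le_trans hs; rewrite lerDr.
have KE0 := L0c (etrans L0a (etrans (congr1 _ s00) (addr0 _))).
have KE2 := L2c (etrans L2a (etrans (congr1 _ s20) (addr0 _))).
rewrite -[K]mulmx1 -E02 mulmxDr /proj_of !mulmxA KE0 KE2 -!scalemxAl -scalerDr.
have -> : psi 0 *m adj (psi 0) + psi 2 *m adj (psi 2) = 1%:M := E02.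
by rewrite scalemx1.
Qed.
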